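(* Let $\mathbf{A}$ be a $(K_1,F_1,Z_1,S_1)$ PDA and $\mathbf{B}$ a $(K_2,F_2,Z_2,S_2)$ PDA. Then there exist integer sets $\mathcal{S}_\mathrm{m},\mathcal{S}_1,\ldots,\mathcal{S}_{K_1}$ and a $(K_1,K_2;F_1F_2;Z_1F_2,Z_2F_1;\mathcal{S}_\mathrm{m},\mathcal{S}_1,\ldots,\mathcal{S}_{K_1})$ HPDA such that $$\Big|\bigcup_{k_1=1}^{K_1}\mathcal{S}_{k_1}\Big|-|\mathcal{S}_\mathrm{m}|=S_1S_2,\qquad |\mathcal{S}_{k_1}|=F_1S_2\ \text{ for all }k_1\in[K_1].$$ Consequently, for every $N\ge K_1K_2$ there is an $F_1F_2$-division coded caching scheme with uncoded placement for the $(K_1,K_2;M_1,M_2;N)$ hierarchical caching system with $\frac{M_1}{N}=\frac{Z_1}{F_1}$, $\frac{M_2}{N}=\frac{Z_2}{F_2}$ and loads $$R_1=\frac{S_1S_2}{F_1F_2},\qquad R_2=\frac{S_2}{F_2}.$$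
   Context: Notation: $[a]=\{1,\ldots,a\}$. PDA. For positive integers $K,F,Z,S$ and an integer set $\mathcal{S}$ with $|\mathcal{S}|=S$, an $F\times K$ array $\mathbf{Q}=(q_{j,k})$ with entries in $\{*\}\cup\mathcal{S}$ is a $(K,F,Z,S)$ placement delivery array (PDA) (over $\mathcal{S}$; by default $\mathcal{S}=[S]$) if: (C1) the symbol $*$ appears exactly $Z$ times in each column; (C2) each integer of $\mathcal{S}$ occurs at least once in the array; (C3) for two distinct entries $q_{j_1,k_1}=q_{j_2,k_2}=s$ with $s$ an integer, we have $j_1\ne j_2$, $k_1\ne k_2$, and $q_{j_1,k_2}=q_{j_2,k_1}=*$. HPDA. Let $K_1,K_2,F,Z_1,Z_2$ be positive integers with $Z_1<F$, $Z_2<F$, and let $\mathcal{S}_\mathrm{m},\mathcal{S}_1,\ldots,\mathcal{S}_{K_1}$ be sets of integers. An $F\times(K_1+K_1K_2)$ array $\mathbf{P}=(\mathbf{P}^{(0)},\mathbf{P}^{(1)},\ldots,\mathbf{P}^{(K_1)})$, where $\mathbf{P}^{(0)}=(p^{(0)}_{j,k_1})_{j\in[F],k_1\in[K_1]}$ has every entry equal to $*$ or to ''null'' (blank), and for each $k_1\in[K_1]$, $\mathbf{P}^{(k_1)}=(p^{(k_1)}_{j,k_2})_{j\in[F],k_2\in[K_2]}$ has entries in $\{*\}\cup\mathcal{S}_{k_1}$, is a $(K_1,K_2;F;Z_1,Z_2;\mathcal{S}_\mathrm{m},\mathcal{S}_1,\ldots,\mathcal{S}_{K_1})$ hierarchical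 placement delivery array (HPDA) if: (B1) each column of $\mathbf{P}^{(0)}$ contains exactly $Z_1$ stars; (B2) for each $k_1\in[K_1]$, $\mathbf{P}^{(k_1)}$ is a $(K_2,F,Z_2,|\mathcal{S}_{k_1}|)$ PDA over $\mathcal{S}_{k_1}$; (B3) each integer $s\in\mathcal{S}_\mathrm{m}$ occurs in exactly one of the subarrays $\mathbf{P}^{(1)},\ldots,\mathbf{P}^{(K_1)}$, and whenever $p^{(k_1)}_{j,k_2}=s\in\mathcal{S}_\mathrm{m}$ we have $p^{(0)}_{j,k_1}=*$; (B4) for any $k_1\ne k_1'\in[K_1]$, $j,j'\in[F]$, $k_2,k_2'\in[K_2]$ with $p^{(k_1)}_{j,k_2}=p^{(k_1')}_{j',k_2'}$ an integer: if $p^{(k_1)}_{j',k_2}$ is an integer then $p^{(0)}_{j',k_1}=*$; and if $p^{(k_1')}_{j,k_2'}$ is an integer then $p^{(0)}_{j,k_1'}=*$. Hierarchical caching model $(K_1,K_2;M_1,M_2;N)$. A server stores $N$ independent files $W_1,\ldots,W_N$, each uniformly distributed on $B$ bits. There are $K_1$ mirror sites, each with a cache of $M_1B$ bits, and $K_1K_2$ users $U_{k_1,k_2}$ ($k_1\in[K_1]$, $k_2\in[K_2]$), each with a cache of $M_2B$ bits; user $U_{k_1,k_2}$ is attached to mirror site $k_1$. The server reaches all mirror sites through one error-free broadcast link; mirror site $k_1$ reaches its $K_2$ attached users through an error-free broadcast link. An $F$-division scheme with uncoded placement ($F\mid B$): each file $W_n$ is split into $F$ packets $W_{n,1},\ldots,W_{n,F}$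 of $B/F$ bits. In the placement phase (without knowledge of demands) mirror site $k_1$ stores a set $\mathcal{Z}_{k_1}$ of packets of total size at most $M_1B$ bits and user $U_{k_1,k_2}$ stores a set $\mathcal{Z}_{(k_1,k_2)}$ of packets of total size at most $M_2B$ bits. In the delivery phase, given a demand vector $\mathbf{d}=(d_{k_1,k_2})\in[N]^{K_1K_2}$, the server broadcasts to the mirror sites a message $X$ consisting of $S(\mathbf{d})$ packet-sized symbols, a function of the files and $\mathbf{d}$; each mirror site $k_1$ broadcasts to its attached users a message $X_{k_1}$ of $S_{k_1}(\mathbf{d})$ packet-sized symbols, a function of $X$, $\mathcal{Z}_{k_1}$ and $\mathbf{d}$; each user $U_{k_1,k_2}$ must recover $W_{d_{k_1,k_2}}$ from $X_{k_1}$, $\mathcal{Z}_{(k_1,k_2)}$ and $\mathbf{d}$. The loads are $R_1=\max_{\mathbf{d}}S(\mathbf{d})/F$ and $R_2=\max_{k_1,\mathbf{d}}S_{k_1}(\mathbf{d})/F$. *)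

(* Defs.v *)
From HB Require Import structures.
From mathcomp Require Import all_boot all_order all_algebra.
From mathcomp Require Import finmap.


Unset Printing Implicit Defensive.
Import Order.TTheory GRing.Theory Num.Theory.
Local Open Scope fset_scope.

(* Arrays: an F x K array Q with entries in {*} u S is a function
   Q : 'I_F -> 'I_K -> option int, where None encodes the star "*"
   and Some s encodes the integer s. *)

Definition is_PDA_over (K F Z : nat) (S : {fset int})
    (Q : 'I_F -> 'I_K -> option int) : Prop :=
  [/\ [/\ 0 < K, 0 < F, 0 < Z & 0 < #|` S|]%N,
      (forall j k s, Q j k = Some s -> s \in S),
      (forall k, #|[set j | Q j k == None]| = Z),
      (forall s, s \in S -> exists j k, Q j k = Some s) &
      (forall j1 j2 k1 k2 s, Q j1 k1 = Some s -> Q j2 k2 = Some s ->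
         (j1, k1) <> (j2, k2) ->
         [/\ j1 <> j2, k1 <> k2, Q j1 k2 = None & Q j2 k1 = None])].

Definition int_range (S : nat) : {fset int} := [fset Posz i | i in iota 1 S].

Definition is_PDA (K F Z S : nat) (Q : 'I_F -> 'I_K -> option int) : Prop :=
  is_PDA_over K F Z (int_range S) Q.

(* (K1,K2;F;Z1,Z2;Sm,S_1,...,S_K1) HPDA.
   P0 j k1 = true encodes "*" and false encodes "null" in the subarray P^(0);
   P k1 is the subarray P^(k1). *)
Definition is_HPDA (K1 K2 F Z1 Z2 : nat) (Sm : {fset int})
    (Ss : 'I_K1 -> {fset int}) (P0 : 'I_F -> 'I_K1 -> bool)
    (P : 'I_K1 -> 'I_F -> 'I_K2 -> option int) : Prop :=
  [/\ [/\ 0 < K1, 0 < K2, 0 < F, 0 < Z1 & 0 < Z2]%N,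
      (Z1 < F /\ Z2 < F)%N,
      (forall k1, #|[set j | P0 j k1]| = Z1),
      (forall k1, is_PDA_over K2 F Z2 (Ss k1) (P k1)) &
      [/\
          (forall s, s \in Sm -> exists! k1, exists j k2, P k1 j k2 = Some s),
          (forall k1 j k2 s, P k1 j k2 = Some s -> s \in Sm -> P0 j k1) &
          (forall k1 k1' j j' k2 k2' s, k1 <> k1' ->
             P k1 j k2 = Some s -> P k1' j' k2' = Some s ->
             (P k1 j' k2 <> None -> P0 j' k1) /\
             (P k1' j k2' <> None -> P0 j k1'))]].

(* A file has B = F * L bits, split into F packets of
   L bits. *)

Definition packet (L : nat) := {ffun 'I_L -> bool}.
Definition library (N F L : nat) := 'I_N -> 'I_F -> packet L.
Definition demand (K1 K2 N : nat) := {ffun 'I_K1 * 'I_K2 -> 'I_N}.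

Definition restrict (N F L : nat) (C : {set 'I_N * 'I_F}) (W : library N F L)
  : 'I_N -> 'I_F -> option (packet L) :=
  fun n f => if (n, f) \in C then Some (W n f) else None.

Arguments restrict {N F L} C W.

Section Scheme.
Variables (K1 K2 N F L : nat).

Record hier_scheme := HierScheme {
  mirror_cache : 'I_K1 -> {set 'I_N * 'I_F};
  user_cache : 'I_K1 -> 'I_K2 -> {set 'I_N * 'I_F};
  server_len : demand K1 K2 N -> nat;
  mirror_len : demand K1 K2 N -> 'I_K1 -> nat;
  server_msg : demand K1 K2 N -> library N F L -> seq (packet L);
  mirror_msg : demand K1 K2 N -> 'I_K1 -> seq (packet L) ->
               ('I_N -> 'I_F -> option (packet L)) -> seq (packet L);
  user_dec : demand K1 K2 N -> 'I_K1 -> 'I_K2 -> seq (packet L) ->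
             ('I_N -> 'I_F -> option (packet L)) -> 'I_F -> packet L }.

Definition mirror_out (sch : hier_scheme) d k1 (W : library N F L) :=
  mirror_msg sch d k1 (server_msg sch d W) (restrict (mirror_cache sch k1) W).

(* validity of a scheme for memory sizes M1, M2 (in units of files) *)
Definition valid_scheme (M1 M2 : rat) (sch : hier_scheme) : Prop :=
  [/\
      (forall k1, ((#|mirror_cache sch k1| * L)%:R <= M1 * (F * L)%:R)%R),
      (forall k1 k2, ((#|user_cache sch k1 k2| * L)%:R <= M2 * (F * L)%:R)%R),
      (forall d W, size (server_msg sch d W) = server_len sch d),
      (forall d k1 W, size (mirror_out sch d k1 W) = mirror_len sch d k1) &
      (forall d k1 k2 W f,
         user_dec sch d k1 k2 (mirror_out sch d k1 W)
                  (restrict (user_cache sch k1 k2) W) f = W (d (k1, k2)) f)].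

Definition load1 (sch : hier_scheme) : rat :=
  ((\max_(d : demand K1 K2 N) server_len sch d)%:R / F%:R)%R.
Definition load2 (sch : hier_scheme) : rat :=
  ((\max_(d : demand K1 K2 N) \max_(k1 < K1) mirror_len sch d k1)%:R / F%:R)%R.

End Scheme.

Arguments mirror_cache {K1 K2 N F L}.
Arguments user_cache {K1 K2 N F L}.
Arguments server_len {K1 K2 N F L}.
Arguments mirror_len {K1 K2 N F L}.
Arguments server_msg {K1 K2 N F L}.
Arguments mirror_msg {K1 K2 N F L}.
Arguments user_dec {K1 K2 N F L}.
Arguments mirror_out {K1 K2 N F L}.
Arguments valid_scheme {K1 K2 N F L}.
Arguments load1 {K1 K2 N F L}.
Arguments load2 {K1 K2 N F L}.

(* Main.v *)
Require Import Defs.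
From HB Require Import structures.
From mathcomp Require Import all_boot all_order all_algebra.
From mathcomp Require Import finmap.
From mathcomp Require Import ring.
Import GRing.Theory Num.Theory.
Local Open Scope fset_scope.

Definition idx {m n : nat} (x : 'I_m * 'I_n) : 'I_(m*n) := cast_ord (mxvec_cast m n) (enum_rank x).
Definition pr {m n : nat} (j : 'I_(m*n)) : 'I_m * 'I_n := enum_val (cast_ord (esym (mxvec_cast m n)) j).
Lemma prK m n : cancel (@idx m n) (@pr m n).
Proof. by move=> x; rewrite /pr /idx cast_ordK enum_rankK. Qed.
Lemma idxK m n : cancel (@pr m n) (@idx m n).
Proof. by move=> j; rewrite /pr /idx enum_valK cast_ordKV. Qed.
Lemma card_pr m n (p : pred ('I_m * 'I_n)) : #|[set j | p (pr j)]| = #|[set x | p x]|.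
Proof.
have -> : [set j | p (pr j)] = idx @: [set x | p x].
  apply/setP=> j; rewrite inE; apply/idP/imsetP.
    by move=> h; exists (pr j); rewrite ?inE ?idxK.
  by case=> x; rewrite inE => px ->; rewrite prK.
by rewrite card_imset //; apply: can_inj (@prK m n).
Qed.
Lemma card_X m n (p1 : pred 'I_m) (p2 : pred 'I_n) :
  #|[set x : 'I_m * 'I_n | p1 x.1 && p2 x.2]| = (#|[set i | p1 i]| * #|[set i | p2 i]|)%N.
Proof.
rewrite -cardsX; apply: eq_card => -[a b]; by rewrite !inE.
Qed.
Lemma int_rangeP {S s} : s \in int_range S -> exists2 i, s = Posz i.+1 & (i < S)%N.
Proof.
rewrite /int_range => /imfsetP [i /= hi ->]; move: hi; rewrite mem_iota.
case: i => // i; rewrite add1n ltnS => /andP[_ h]; by exists i.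
Qed.
Lemma int_rangeI {S i} : (i < S)%N -> Posz i.+1 \in int_range S.
Proof. move=> h; apply/imfsetP; exists i.+1 => //=; by rewrite mem_iota add1n ltnS. Qed.
Lemma card_sep (T : choiceType) (A : {fset T}) (p : pred T) :
  (#|` [fset x in A | p x]| + #|` [fset x in A | ~~ p x]|)%N = #|` A|.
Proof.
rewrite -(cardfsID [fset x in A | p x] A); congr (_ + _)%N; congr #|` _|; apply/fsetP=> x;
 rewrite !inE; by case: (x \in A); case: (p x).
Qed.

Lemma divmod_inj {S a b a' b'} : (b < S)%N -> (b' < S)%N ->
  (a * S + b = a' * S + b')%N -> a = a' /\ b = b'.
Proof.
move=> hb hb' e.
have S0 : (0 < S)%N by case: S hb {hb' e}.
have h1 : ((a * S + b) %/ S = a)%N by rewrite divnMDl // (divn_small hb) addn0.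
have h2 : ((a' * S + b') %/ S = a')%N by rewrite divnMDl // (divn_small hb') addn0.
have ea : a = a' by rewrite -h1 -h2 e.
split=> //; move: e; rewrite ea; by move/addnI.
Qed.

Definition nofi (s : int) : nat := (absz s).-1.
Lemma nofiE i : nofi (Posz i.+1) = i. Proof. by []. Qed.

Lemma int_range_nofi {S s} : s \in int_range S -> s = Posz (nofi s).+1 /\ (nofi s < S)%N.
Proof. by case/int_rangeP=> i -> h; split. Qed.

Lemma int_range_inj {S s s'} : s \in int_range S -> s' \in int_range S -> nofi s = nofi s' -> s = s'.
Proof.
move=> /int_range_nofi[e _] /int_range_nofi[e' _] h; by rewrite e e' h.
Qed.

Definition isneg (s : int) : bool := if s is Negz _ then true else false.

Definition codeP (K1 F1 S2 : nat) (A : 'I_F1 -> 'I_K1 -> option int)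
  (k1 : 'I_K1) (j1 : 'I_F1) (s2 : int) : int :=
  match A j1 k1 with
  | Some s1 => Posz (nofi s1 * S2 + nofi s2)
  | None => Negz ((k1 * F1 + j1) * S2 + nofi s2)
  end.

Arguments codeP {K1 F1} S2 A k1 j1 s2.

Lemma codeP_eq {K1 F1 S1 S2} {A : 'I_F1 -> 'I_K1 -> option int} {k1 k1' j1 j1' s2 s2'} :
  (forall j k s, A j k = Some s -> s \in int_range S1) ->
  s2 \in int_range S2 -> s2' \in int_range S2 ->
  codeP S2 A k1 j1 s2 = codeP S2 A k1' j1' s2' ->
  s2 = s2' /\
  ((k1 = k1' /\ j1 = j1' /\ A j1 k1 = None /\ A j1' k1' = None) \/
   exists s1, A j1 k1 = Some s1 /\ A j1' k1' = Some s1).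
Proof.
move=> Arng hs hs'.
have [_ lt] := int_range_nofi hs; have [_ lt'] := int_range_nofi hs'.
rewrite /codeP.
case eA: (A j1 k1) => [s1|]; case eA': (A j1' k1') => [s1'|] // e.
- have [e1 e2] := divmod_inj lt lt' (congr1 absz e).
  split; first exact: int_range_inj hs hs' e2.
  right; exists s1; split=> //; congr Some.
  exact: int_range_inj (Arng _ _ _ eA') (Arng _ _ _ eA) (esym e1).
- case: e => e.
  have [e1 e2] := divmod_inj lt lt' e.
  split; first exact: int_range_inj hs hs' e2.
  left; have [ek ej] := divmod_inj (ltn_ord j1) (ltn_ord j1') e1.
  by split; [apply: val_inj | split; [apply: val_inj|]].
Qed.

Definition Pm {K1 F1 K2 F2} S2 (A : 'I_F1 -> 'I_K1 -> option int) (B : 'I_F2 -> 'I_K2 -> option int)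
  (k1 : 'I_K1) (j : 'I_(F1 * F2)) (k2 : 'I_K2) : option int :=
  match B (pr j).2 k2 with
  | Some s2 => Some (codeP S2 A k1 (pr j).1 s2)
  | None => None
  end.

Definition cP {K1 F1} S2 (A : 'I_F1 -> 'I_K1 -> option int) k1 (x : 'I_F1 * 'I_S2) : int :=
  codeP S2 A k1 x.1 (Posz x.2.+1).

Definition Ssm {K1 F1} S2 (A : 'I_F1 -> 'I_K1 -> option int) (k1 : 'I_K1) : {fset int} :=
  [fset cP S2 A k1 x | x : 'I_F1 * 'I_S2].

Definition Um {K1 F1} S2 (A : 'I_F1 -> 'I_K1 -> option int) : {fset int} :=
  \bigcup_(k1 <- enum 'I_K1) Ssm S2 A k1.

Definition Smm {K1 F1} S2 (A : 'I_F1 -> 'I_K1 -> option int) : {fset int} :=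
  [fset s in Um S2 A | isneg s].

Definition tc S1 S2 (x : 'I_S1 * 'I_S2) : int := Posz (x.1 * S2 + x.2).

Lemma Ssm_mem {K1 F1 S2} (A : 'I_F1 -> 'I_K1 -> option int) k1 s :
  s \in Ssm S2 A k1 -> exists j1 b, (b < S2)%N /\ s = codeP S2 A k1 j1 (Posz b.+1).
Proof. by case/imfsetP=> -[j1 b] _ ->; exists j1, b. Qed.

Lemma Ssm_memI {K1 F1 S2} (A : 'I_F1 -> 'I_K1 -> option int) k1 j1 b :
  (b < S2)%N -> codeP S2 A k1 j1 (Posz b.+1) \in Ssm S2 A k1.
Proof. move=> hb; apply/imfsetP; by exists (j1, Ordinal hb). Qed.

Lemma Um_mem {K1 F1 S2} (A : 'I_F1 -> 'I_K1 -> option int) s :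
  (s \in Um S2 A) = [exists k1, s \in Ssm S2 A k1].
Proof.
apply/bigfcupP/existsP.
  by case=> k1 _ h; exists k1.
by case=> k1 h; exists k1 => //; rewrite mem_enum.
Qed.

Lemma PDA_basic {K F Z S} {Q : 'I_F -> 'I_K -> option int} :
  is_PDA_over K F Z S Q -> (Z < F)%N.
Proof.
case=> [[K0 F0 Z0 S0] _ Cstar Call _].
move: S0; rewrite cardfs_gt0 => /fset0Pn[s /Call[j [k e]]].
rewrite -(Cstar k).
apply: (@leq_ltn_trans #|[set~ j]|).
  apply: subset_leq_card; apply/subsetP=> i; rewrite !inE.
  by apply: contraTneq => ->; rewrite e.
by rewrite cardsC1 card_ord prednK.
Qed.

Lemma int_range_pos {S} : (0 < #|` int_range S|)%N -> (0 < S)%N.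
Proof. by rewrite cardfs_gt0 => /fset0Pn[s /int_rangeP[i _ h]]; apply: leq_ltn_trans h. Qed.

Lemma A_unique_col {K F Z S} {Q : 'I_F -> 'I_K -> option int} {j j' k s} :
  is_PDA_over K F Z S Q -> Q j k = Some s -> Q j' k = Some s -> j = j'.
Proof.
case=> _ _ _ _ C3 e e'; apply/eqP; apply/negPn/negP => /eqP ne.
have [_ h _ _] := C3 _ _ _ _ _ e e' (fun E => ne (congr1 fst E)); exact: h.
Qed.

Lemma card_Ssm {K1 F1 Z1 S1 S2} (A : 'I_F1 -> 'I_K1 -> option int) k1 :
  is_PDA K1 F1 Z1 S1 A -> #|` Ssm S2 A k1| = (F1 * S2)%N.
Proof.
move=> hA; have [_ Arng _ _ _] := hA.
rewrite /Ssm card_imfset /=; last first.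
  move=> [a b] [a' b']; rewrite /cP /= => e.
  have [e2 h] := codeP_eq Arng (int_rangeI (ltn_ord b)) (int_rangeI (ltn_ord b')) e.
  have eb : b = b' by apply: val_inj; case: e2.
  have ea : a = a'.
    case: h => [[_ [-> _]] // | [s1 [e1 e1']]].
    exact: A_unique_col hA e1 e1'.
  by rewrite ea eb.
by rewrite -cardE card_prod !card_ord.
Qed.

Lemma pos_part {K1 F1 Z1 S1 S2} (A : 'I_F1 -> 'I_K1 -> option int) :
  is_PDA K1 F1 Z1 S1 A ->
  [fset s in Um S2 A | ~~ isneg s] = [fset tc S1 S2 x | x : 'I_S1 * 'I_S2].
Proof.
move=> hA; have [_ Arng _ Aall _] := hA.
apply/fsetP=> s; rewrite !inE Um_mem; apply/idP/idP.
  case/andP=> /existsP[k1 /Ssm_mem[j1 [b [hb ->]]]].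
  rewrite /codeP; case eA: (A j1 k1) => [s1|] //= _.
  have [e1 h1] := int_range_nofi (Arng _ _ _ eA).
  apply/imfsetP; exists (Ordinal h1, Ordinal hb) => //.
case/imfsetP=> -[a b] _ ->; rewrite /tc /=.
have /Aall[j1 [k1 e]] := int_rangeI (ltn_ord a).
apply/andP; split => //; apply/existsP; exists k1.
have -> : Posz (a * S2 + b) = codeP S2 A k1 j1 (Posz b.+1) by rewrite /codeP e.
exact: Ssm_memI.
Qed.

Lemma card_Um {K1 F1 Z1 S1 S2} {A : 'I_F1 -> 'I_K1 -> option int} :
  is_PDA K1 F1 Z1 S1 A -> #|` Um S2 A| = (S1 * S2 + #|` Smm S2 A|)%N.
Proof.
move=> hA; rewrite -(@card_sep _ (Um S2 A) (fun s => ~~ isneg s)) /Smm.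
have -> : [fset x in Um S2 A | ~~ ~~ isneg x] = [fset x in Um S2 A | isneg x].
  by apply/fsetP=> x; rewrite !inE negbK.
congr (_ + _)%N; rewrite (@pos_part _ _ _ _ S2 _ hA) card_imfset /=; last first.
  move=> [a b] [a' b'] [] /(divmod_inj (ltn_ord b) (ltn_ord b')) [ea eb].
  by congr pair; apply: val_inj.
by rewrite -cardE card_prod !card_ord.
Qed.

Lemma card_pr1 m n (p : pred 'I_m) : #|[set j : 'I_(m * n) | p (pr j).1]| = (#|[set i | p i]| * n)%N.
Proof.
rewrite (@card_pr m n (fun x : 'I_m * 'I_n => p x.1)).
have -> : [set x : 'I_m * 'I_n | p x.1] = setX [set i | p i] [set: 'I_n].
  by apply/finset.setP => -[a b]; rewrite !inE andbT.
by rewrite cardsX cardsT card_ord.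
Qed.

Lemma card_pr2 m n (p : pred 'I_n) : #|[set j : 'I_(m * n) | p (pr j).2]| = (m * #|[set i | p i]|)%N.
Proof.
rewrite (@card_pr m n (fun x : 'I_m * 'I_n => p x.2)).
have -> : [set x : 'I_m * 'I_n | p x.2] = setX [set: 'I_m] [set i | p i].
  by apply/finset.setP => -[a b]; rewrite !inE.
by rewrite cardsX cardsT card_ord.
Qed.

Lemma part1 K1 F1 Z1 S1 K2 F2 Z2 S2 A B :
  is_PDA K1 F1 Z1 S1 A -> is_PDA K2 F2 Z2 S2 B ->
  [/\ is_HPDA K1 K2 (F1 * F2) (Z1 * F2) (Z2 * F1) (Smm S2 A) (Ssm S2 A)
        (fun j k1 => A (pr j).1 k1 == None) (Pm S2 A B),
      #|` Um S2 A| = (S1 * S2 + #|` Smm S2 A|)%N &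
      forall k1, #|` Ssm S2 A k1| = (F1 * S2)%N].
Proof.
move=> hA hB.
have ZF1 := PDA_basic hA; have ZF2 := PDA_basic hB.
have [[K1p F1p Z1p S1p] Arng Astar Aall AC3] := hA.
have [[K2p F2p Z2p /int_range_pos S2p] Brng Bstar Ball BC3] := hB.
have cS : forall k1, #|` Ssm S2 A k1| = (F1 * S2)%N by move=> k1; exact: (@card_Ssm K1 F1 Z1 S1 S2 A k1 hA).
have PDAk : forall k1, is_PDA_over K2 (F1 * F2) (Z2 * F1) (Ssm S2 A k1) (Pm S2 A B k1).
  move=> k1; split.
  - by rewrite cS !muln_gt0 K2p F1p F2p Z2p S2p.
  - move=> j k s; rewrite /Pm; case eB: (B (pr j).2 k) => [s2|] // [<-].
    have [e h] := int_range_nofi (Brng _ _ _ eB).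
    rewrite e; exact: Ssm_memI.
  - move=> k; rewrite [RHS]mulnC -(Bstar k) -(card_pr2 F1 F2 (fun i => B i k == None)); apply: eq_card => j; rewrite !inE /Pm.
    by case: (B (pr j).2 k).
  - move=> s /Ssm_mem[j1 [b [hb ->]]].
    have [j2 [k2 e]] := Ball _ (int_rangeI hb).
    exists (idx (j1, j2)), k2; by rewrite /Pm prK /= e.
  - move=> j j' k k' s; rewrite /Pm.
    case eB: (B (pr j).2 k) => [s2|] //; case eB': (B (pr j').2 k') => [s2'|] // [<-] [] e ne.
    have [es h] := codeP_eq Arng (Brng _ _ _ eB) (Brng _ _ _ eB') (esym e).
    have ej : (pr j).1 = (pr j').1.
      case: h => [[_ [-> _]] // | [s1 [e1 e1']]].
      exact: A_unique_col hA e1 e1'.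
    have ne2 : ((pr j).2, k) <> ((pr j').2, k').
      case=> e2 ek; apply: ne; congr pair => //.
      have epr : pr j = pr j'.
        by move: ej e2; case: (pr j) => a b; case: (pr j') => a' b' /= -> ->.
      by rewrite -(idxK _ _ j) epr idxK.
    rewrite es in eB.
    have [n2 nk h1 h2] := BC3 _ _ _ _ _ eB eB' ne2.
    split=> //; first by move=> ejj; apply: n2; rewrite ejj.
    + by rewrite h1.
    + by rewrite h2.
split; [split | exact: card_Um hA | exact: cS].
- by split=> //; rewrite muln_gt0 ?F1p ?F2p ?Z1p ?Z2p.
- by split; [rewrite ltn_pmul2r | rewrite mulnC ltn_pmul2l].
- by move=> k1; rewrite (card_pr1 F1 F2 (fun i => A i k1 == None)) Astar.
- exact: PDAk.
- split.
  + move=> s; rewrite inE => /andP[]; rewrite Um_mem => /existsP[k1 hs] neg.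
    have [_ _ _ C2 _] := PDAk k1.
    exists k1; split; first exact: C2.
    move=> k1' [j' [k2' e']].
    have [j1 [b [hb es]]] := Ssm_mem _ _ _ hs.
    move: e'; rewrite /Pm; case eB': (B (pr j').2 k2') => [s2'|] // [e'].
    rewrite es in neg e'.
    have [_ h] := codeP_eq Arng (int_rangeI hb) (Brng _ _ _ eB') (esym e').
    case: h => [[-> _] // | [s1 [e1 _]]].
    by move: neg; rewrite /codeP e1.
  + move=> k1 j k2 s; rewrite /Pm inE; case eB: (B (pr j).2 k2) => [s2|] // [<-].
    by rewrite /codeP; case: (A (pr j).1 k1) => // ? /andP[].
  + move=> k1 k1' j j' k2 k2' s nk; rewrite /Pm.
    case eB: (B (pr j).2 k2) => [s2|] //; case eB': (B (pr j').2 k2') => [s2'|] // [<-] [] e.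
    have [_ h] := codeP_eq Arng (Brng _ _ _ eB) (Brng _ _ _ eB') (esym e).
    case: h => [[ek _] | [s1 [e1 e1']]]; first by case: nk.
    have ne : ((pr j).1, k1) <> ((pr j').1, k1') by case=> _ ek; apply: nk.
    have [_ _ h1 h2] := AC3 _ _ _ _ _ e1 e1' ne.
    by split=> _; apply/eqP.
Qed.

Local Open Scope ring_scope.

Definition seq_of {T : finType} {L} (f : T -> packet L) : seq (packet L) := [seq f x | x <- enum T].
Definition getp {T : finType} {L} (s : seq (packet L)) (x : T) : packet L := nth 0 s (enum_rank x).

Lemma getp_seq_of {T : finType} {L} (f : T -> packet L) x : getp (seq_of f) x = f x.
Proof.
rewrite /getp /seq_of (nth_map x); first by rewrite nth_enum_rank.
by rewrite -cardE ltn_ord.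
Qed.

Lemma size_seq_of {T : finType} {L} (f : T -> packet L) : size (seq_of f) = #|T|.
Proof. by rewrite /seq_of size_map -cardE. Qed.

Definition getc {N F L} (C : 'I_N -> 'I_F -> option (packet L)) n f : packet L := odflt 0 (C n f).
Definition full {N F L} (W : library N F L) : 'I_N -> 'I_(F) -> option (packet L) := fun n f => Some (W n f).

Definition Ysum {K1 K2 N F1 F2 L} (B : 'I_F2 -> 'I_K2 -> option int) (d : demand K1 K2 N)
  (C : 'I_N -> 'I_(F1 * F2) -> option (packet L)) (k1 : 'I_K1) (j1 : 'I_F1) (s2 : int) : packet L :=
  \sum_(p : 'I_F2 * 'I_K2 | B p.1 p.2 == Some s2) getc C (d (k1, p.2)) (idx (j1, p.1)).

Definition Tsum {K1 K2 N F1 F2 L} (A : 'I_F1 -> 'I_K1 -> option int) (B : 'I_F2 -> 'I_K2 -> option int)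
  (d : demand K1 K2 N) (W : library N (F1 * F2) L) (s1 s2 : int) : packet L :=
  \sum_(q : 'I_F1 * 'I_K1 | A q.1 q.2 == Some s1) Ysum B d (full W) q.2 q.1 s2.

Definition smsg {K1 K2 N F1 F2 L} S1 S2 A B (d : demand K1 K2 N) (W : library N (F1 * F2) L) :=
  seq_of (fun x : 'I_S1 * 'I_S2 => Tsum A B d W (Posz x.1.+1) (Posz x.2.+1)).

Definition Mval {K1 K2 N F1 F2 L} S1 S2 (A : 'I_F1 -> 'I_K1 -> option int) B (d : demand K1 K2 N) k1
  (X : seq (packet L)) (C : 'I_N -> 'I_(F1 * F2) -> option (packet L)) (j1 : 'I_F1) (b : 'I_S2) : packet L :=
  match A j1 k1 with
  | None => Ysum B d C k1 j1 (Posz b.+1)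
  | Some s1 =>
      (if @insub _ (fun i => i < S1)%N 'I_S1 (nofi s1) is Some a then getp X (a, b) else 0)
      - \sum_(q : 'I_F1 * 'I_K1 | (A q.1 q.2 == Some s1) && (q != (j1, k1))) Ysum B d C q.2 q.1 (Posz b.+1)
  end.

Definition mmsg {K1 K2 N F1 F2 L} S1 S2 A B (d : demand K1 K2 N) k1 (X : seq (packet L)) C :=
  seq_of (fun x : 'I_F1 * 'I_S2 => @Mval K1 K2 N F1 F2 L S1 S2 A B d k1 X C x.1 x.2).

Definition udec {K1 K2 N F1 F2 L} S2 (B : 'I_F2 -> 'I_K2 -> option int) (d : demand K1 K2 N) k1 k2
  (Xk : seq (packet L)) (C : 'I_N -> 'I_(F1 * F2) -> option (packet L)) (f : 'I_(F1 * F2)) : packet L :=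
  match B (pr f).2 k2 with
  | None => getc C (d (k1, k2)) f
  | Some s2 =>
      (if @insub _ (fun i => i < S2)%N 'I_S2 (nofi s2) is Some b then getp Xk ((pr f).1, b) else 0)
      - \sum_(p : 'I_F2 * 'I_K2 | (B p.1 p.2 == Some s2) && (p != ((pr f).2, k2)))
          getc C (d (k1, p.2)) (idx ((pr f).1, p.1))
  end.

Definition mcache {K1 N F1 F2} (A : 'I_F1 -> 'I_K1 -> option int) (k1 : 'I_K1) : {set 'I_N * 'I_(F1 * F2)} :=
  [set x : 'I_N * 'I_(F1 * F2) | A (pr x.2).1 k1 == None].
Definition ucache {K2 N F1 F2} (B : 'I_F2 -> 'I_K2 -> option int) (k2 : 'I_K2) : {set 'I_N * 'I_(F1 * F2)} :=
  [set x : 'I_N * 'I_(F1 * F2) | B (pr x.2).2 k2 == None].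

Definition the_scheme {K1 K2 N F1 F2} L S1 S2 A B : hier_scheme K1 K2 N (F1 * F2) L :=
  @HierScheme K1 K2 N (F1 * F2) L
    (fun k1 => mcache A k1)
    (fun k1 k2 => ucache B k2)
    (fun _ => S1 * S2)%N
    (fun _ _ => F1 * S2)%N
    (@smsg K1 K2 N F1 F2 L S1 S2 A B)
    (@mmsg K1 K2 N F1 F2 L S1 S2 A B)
    (@udec K1 K2 N F1 F2 L S2 B).

Lemma Ysum_ext {K1 K2 N F1 F2 L} (B : 'I_F2 -> 'I_K2 -> option int) (d : demand K1 K2 N)
  (C : 'I_N -> 'I_(F1 * F2) -> option (packet L)) (W : library N (F1 * F2) L) k1 j1 s2 :
  (forall n j2, C n (idx (j1, j2)) = Some (W n (idx (j1, j2)))) ->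
  Ysum B d C k1 j1 s2 = Ysum B d (full W) k1 j1 s2.
Proof. by move=> h; apply: eq_bigr => p _; rewrite /getc h. Qed.

Lemma restrict_mc {K1 N F1 F2 L} (A : 'I_F1 -> 'I_K1 -> option int) k1 (W : library N (F1 * F2) L) j1 :
  A j1 k1 = None -> forall n j2,
  restrict (mcache A k1) W n (idx (j1, j2)) = Some (W n (idx (j1, j2))).
Proof. by move=> e n j2; rewrite /restrict inE /= prK /= e. Qed.

Lemma restrict_uc {K2 N F1 F2 L} (B : 'I_F2 -> 'I_K2 -> option int) k2 (W : library N (F1 * F2) L) j1 j2 :
  B j2 k2 = None -> forall n,
  restrict (ucache B k2) W n (idx (j1, j2)) = Some (W n (idx (j1, j2))).
Proof. by move=> e n; rewrite /restrict inE /= prK /= e. Qed.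

Lemma mirror_ok {K1 F1 Z1 S1 K2 F2 Z2 S2 N L} (A : 'I_F1 -> 'I_K1 -> option int)
  (B : 'I_F2 -> 'I_K2 -> option int) (d : demand K1 K2 N) k1 (W : library N (F1 * F2) L) j1 (b : 'I_S2) :
  is_PDA K1 F1 Z1 S1 A -> is_PDA K2 F2 Z2 S2 B ->
  Mval S1 S2 A B d k1 (smsg S1 S2 A B d W) (restrict (mcache A k1) W) j1 b =
  Ysum B d (full W) k1 j1 (Posz b.+1).
Proof.
move=> hA _; have [_ Arng _ _ AC3] := hA.
rewrite /Mval; case eA: (A j1 k1) => [s1|]; last first.
  by apply: Ysum_ext; apply: restrict_mc.
have [e1 h1] := int_range_nofi (Arng _ _ _ eA).
rewrite (insubT (fun i => i < S1)%N h1) /smsg getp_seq_of /= -e1 /Tsum.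
rewrite (bigD1 (j1, k1)) /=; last by rewrite eA.
have -> : \sum_(q : 'I_F1 * 'I_K1 | (A q.1 q.2 == Some s1) && (q != (j1, k1)))
            Ysum B d (restrict (mcache A k1) W) q.2 q.1 (Posz b.+1) =
          \sum_(q : 'I_F1 * 'I_K1 | (A q.1 q.2 == Some s1) && (q != (j1, k1)))
            Ysum B d (full W) q.2 q.1 (Posz b.+1).
  apply: eq_bigr => -[j1' k1'] /andP[/eqP e' ne] /=.
  apply: Ysum_ext; apply: restrict_mc.
  have ne2 : (j1', k1') <> (j1, k1) by move=> E; move: ne; rewrite E eqxx.
  by have [_ _ -> _] := AC3 _ _ _ _ _ e' eA ne2.
by rewrite addrK.
Qed.

Lemma user_ok {K1 F1 Z1 S1 K2 F2 Z2 S2 N L} (A : 'I_F1 -> 'I_K1 -> option int)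
  (B : 'I_F2 -> 'I_K2 -> option int) (d : demand K1 K2 N) k1 k2 (W : library N (F1 * F2) L) f :
  is_PDA K1 F1 Z1 S1 A -> is_PDA K2 F2 Z2 S2 B ->
  udec S2 B d k1 k2 (mmsg S1 S2 A B d k1 (smsg S1 S2 A B d W) (restrict (mcache A k1) W))
       (restrict (ucache B k2) W) f = W (d (k1, k2)) f.
Proof.
move=> hA hB; have [_ Brng _ _ BC3] := hB.
have [[j1 j2] ->] : exists x, f = idx x by exists (pr f); rewrite idxK.
rewrite /udec prK /=; case eB: (B j2 k2) => [s2|]; last first.
  by rewrite /getc restrict_uc.
have [e2 h2] := int_range_nofi (Brng _ _ _ eB).
rewrite (insubT (fun i => i < S2)%N h2) /mmsg getp_seq_of /=.
rewrite (mirror_ok _ _ _ _ _ _ _ hA hB) -e2 /Ysum.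
rewrite (bigD1 (j2, k2)) /=; last by rewrite eB.
have -> : \sum_(p : 'I_F2 * 'I_K2 | (B p.1 p.2 == Some s2) && (p != (j2, k2)))
            getc (restrict (ucache B k2) W) (d (k1, p.2)) (idx (j1, p.1)) =
          \sum_(p : 'I_F2 * 'I_K2 | (B p.1 p.2 == Some s2) && (p != (j2, k2)))
            getc (full W) (d (k1, p.2)) (idx (j1, p.1)).
  apply: eq_bigr => -[j2' k2'] /andP[/eqP e' ne] /=.
  rewrite /getc restrict_uc //.
  have ne2 : (j2', k2') <> (j2, k2) by move=> E; move: ne; rewrite E eqxx.
  by have [_ _ -> _] := BC3 _ _ _ _ _ e' eB ne2.
by rewrite addrK.
Qed.

Lemma max_const (T : finType) (x0 : T) (c : nat) : (\max_(i : T) c)%N = c.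
Proof.
apply/eqP; rewrite eqn_leq (@leq_bigmax T (fun _ => c) x0) andbT.
by apply/bigmax_leqP => i _.
Qed.

Lemma card_mcache {K1 N F1 F2} (A : 'I_F1 -> 'I_K1 -> option int) k1 :
  #|@mcache K1 N F1 F2 A k1| = (N * (#|[set i | A i k1 == None]| * F2))%N.
Proof.
have -> : @mcache K1 N F1 F2 A k1 = setX [set: 'I_N] [set f : 'I_(F1 * F2) | A (pr f).1 k1 == None].
  by apply/finset.setP => -[n f]; rewrite !inE.
by rewrite cardsX cardsT card_ord (card_pr1 F1 F2 (fun i => A i k1 == None)).
Qed.

Lemma card_ucache {K2 N F1 F2} (B : 'I_F2 -> 'I_K2 -> option int) k2 :
  #|@ucache K2 N F1 F2 B k2| = (N * (F1 * #|[set i | B i k2 == None]|))%N.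
Proof.
have -> : @ucache K2 N F1 F2 B k2 = setX [set: 'I_N] [set f : 'I_(F1 * F2) | B (pr f).2 k2 == None].
  by apply/finset.setP => -[n f]; rewrite !inE.
by rewrite cardsX cardsT card_ord (card_pr2 F1 F2 (fun i => B i k2 == None)).
Qed.

Local Close Scope ring_scope.

Theorem theorem3 (K1 F1 Z1 S1 K2 F2 Z2 S2 : nat)
  (A : 'I_F1 -> 'I_K1 -> option int) (B : 'I_F2 -> 'I_K2 -> option int) :
  is_PDA K1 F1 Z1 S1 A -> is_PDA K2 F2 Z2 S2 B ->
  (exists (Sm : {fset int}) (Ss : 'I_K1 -> {fset int})
          (P0 : 'I_(F1 * F2) -> 'I_K1 -> bool)
          (P : 'I_K1 -> 'I_(F1 * F2) -> 'I_K2 -> option int),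
     [/\ is_HPDA K1 K2 (F1 * F2) (Z1 * F2) (Z2 * F1) Sm Ss P0 P,
         #|` \bigcup_(k1 <- enum 'I_K1) Ss k1| = (S1 * S2 + #|` Sm|)%N &
         forall k1, #|` Ss k1| = (F1 * S2)%N])
  /\
  (forall N : nat, (K1 * K2 <= N)%N -> forall L : nat, (0 < L)%N ->
     exists sch : hier_scheme K1 K2 N (F1 * F2) L,
       [/\ valid_scheme ((N * Z1)%:R / F1%:R) ((N * Z2)%:R / F2%:R) sch,
           load1 sch = ((S1 * S2)%:R / (F1 * F2)%:R)%R &
           load2 sch = (S2%:R / F2%:R)%R]).
Proof.
move=> hA hB; split.
  exists (Smm S2 A), (Ssm S2 A), (fun j k1 => A (pr j).1 k1 == None), (Pm S2 A B).
  exact: part1.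
move=> N hN L L0.
have [[K1p F1p Z1p _] _ Astar _ _] := hA.
have [[K2p F2p Z2p _] _ Bstar _ _] := hB.
have N0 : (0 < N)%N by apply: leq_trans hN; rewrite muln_gt0 K1p K2p.
have F1n : (F1%:R != 0 :> rat)%R by rewrite pnatr_eq0 -lt0n.
have F2n : (F2%:R != 0 :> rat)%R by rewrite pnatr_eq0 -lt0n.
exists (@the_scheme K1 K2 N F1 F2 L S1 S2 A B); split.
- split.
  + move=> k1 /=; rewrite card_mcache Astar.
    rewrite !natrM Order.POrderTheory.le_eqVlt; apply/orP; left; apply/eqP; field.
    exact: F1n.
  + move=> k1 k2 /=; rewrite card_ucache Bstar.
    rewrite !natrM Order.POrderTheory.le_eqVlt; apply/orP; left; apply/eqP; field.
    exact: F2n.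
  + by move=> d W /=; rewrite /smsg size_seq_of card_prod !card_ord.
  + by move=> d k1 W; rewrite /mirror_out /= /mmsg size_seq_of card_prod !card_ord.
  + move=> d k1 k2 W f; by rewrite /mirror_out /=; apply: (user_ok _ _ _ _ _ _ _ hA hB).
- rewrite /load1 /=.
  by rewrite (max_const _ ([ffun=> Ordinal N0] : demand K1 K2 N)).
- rewrite /load2 /=.
  rewrite (max_const _ (Ordinal K1p)).
  rewrite (max_const _ ([ffun=> Ordinal N0] : demand K1 K2 N)) !natrM; field.
  by rewrite F1n F2n.
Qed.
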